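(* Let $\|\cdot\|_A$ be a norm on $\mathbb{R}^n$ that is decomposable with respect to $\mathcal{G}$. Then there exists a constant $f>0$, depending only on $n,k,\mathcal{G}$ and $\|\cdot\|_A$, such that for every $h\in\mathbb{R}^n$, every $\Lambda_0\in\mathrm{GkS}$, and every optimal group $k$-sparse decomposition $\Lambda_1,\ldots,\Lambda_s$ of $h_{\mathcal{N}\setminus\Lambda_0}$ with respect to $\|\cdot\|_A$, $$\sum_{j=2}^s\|h_{\Lambda_j}\|_2\le\frac1f\,\|h_{\mathcal{N}\setminus\Lambda_0}\|_A .$$
   Context: Fix positive integers $n,k$, let $\mathcal{N}=\{1,\ldots,n\}$ and let $\mathcal{G}=\{G_1,\ldots,G_g\}$ be a partition of $\mathcal{N}$ with $|G_i|\le k$ for all $i$. For $x\in\mathbb{R}^n$ and $\Lambda\subseteq\mathcal{N}$, $x_\Lambda$ is the vector with $(x_\Lambda)_i=x_i$ for $i\in\Lambda$ and $0$ otherwise; $\mathrm{supp}(u)=\{i:u_i\ne0\}$. For $S\subseteq\{1,\ldots,g\}$, $G_S=\bigcup_{i\in S}G_i$. A set $\Lambda\subseteq\mathcal{N}$ is group $k$-sparse if $\Lambda=G_S$ for some $S$ and $|\Lambda|\le k$; $\mathrm{GkS}$ denotes the collection of all group $k$-sparse sets. A norm $\|\cdot\|$ is decomposable with respect to $\mathcal{G}$ if $\|u+v\|=\|u\|+\|v\|$ whenever $\mathrm{supp}(u)\subseteq G_{S_u}$, $\mathrm{supp}(v)\subseteq G_{S_v}$ with $S_u\cap S_v=\emptyset$.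 Given $h$ and $\Lambda_0\in\mathrm{GkS}$, put $v=h_{\mathcal{N}\setminus\Lambda_0}$; an optimal group $k$-sparse decomposition of $v$ with respect to $\|\cdot\|_A$ is a sequence $\Lambda_1,\ldots,\Lambda_s$ of pairwise disjoint group $k$-sparse subsets of $\mathcal{N}\setminus\Lambda_0$ whose union is $\mathcal{N}\setminus\Lambda_0$ (so $v=\sum_{j=1}^s v_{\Lambda_j}$ and $v_{\Lambda_j}=h_{\Lambda_j}$), such that for each $i$, with $r_i=v-\sum_{j<i}v_{\Lambda_j}$, the set $\Lambda_i$ minimizes $\|r_i-(r_i)_\Lambda\|_A$ over group $k$-sparse $\Lambda\subseteq\mathcal{N}\setminus(\Lambda_0\cup\Lambda_1\cup\cdots\cup\Lambda_{i-1})$. An empty sum is $0$. *)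

(* Defs.v *)
From HB Require Import structures.
From mathcomp Require Import all_boot all_order all_algebra.
From mathcomp Require Import reals.
Set Implicit Arguments. Unset Strict Implicit. Unset Printing Implicit Defensive.
Import Order.TTheory GRing.Theory Num.Theory.
Local Open Scope ring_scope.

Section Defs.
Variables (R : realType) (n : nat).

Definition restrict (x : 'rV[R]_n) (A : {set 'I_n}) : 'rV[R]_n :=
  \row_i (if i \in A then x ord0 i else 0).

Definition supp (x : 'rV[R]_n) : {set 'I_n} := [set i | x ord0 i != 0].

Definition l2norm (x : 'rV[R]_n) : R := Num.sqrt (\sum_i x ord0 i ^+ 2).

Definition is_norm (nA : 'rV[R]_n -> R) : Prop :=
  [/\ forall x, 0 <= nA x,
      forall x, nA x = 0 -> x = 0,
      forall (a : R) x, nA (a *: x) = `|a| * nA x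
    & forall x y, nA (x + y) <= nA x + nA y].

(* P is the partition G of N = 'I_n (its blocks are the groups G_i).
   A is group k-sparse: A = G_S for some set S of groups, and |A| <= k. *)
Definition group_sparse (P : {set {set 'I_n}}) (k : nat) (A : {set 'I_n}) : Prop :=
  (exists2 S : {set {set 'I_n}}, S \subset P & A = cover S) /\ (#|A| <= k)%N.

Definition decomposable (P : {set {set 'I_n}}) (nA : 'rV[R]_n -> R) : Prop :=
  forall (u v : 'rV[R]_n) (Su Sv : {set {set 'I_n}}),
    Su \subset P -> Sv \subset P -> [disjoint Su & Sv] ->
    supp u \subset cover Su -> supp v \subset cover Sv ->
    nA (u + v) = nA u + nA v.

(* Ls = [:: Lambda_1; ...; Lambda_s] (0-based: nth set0 Ls j = Lambda_{j+1})
   is an optimal group k-sparse decomposition of v = h_{N \ L0} w.r.t. nA. *)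
Definition optimal_decomp (P : {set {set 'I_n}}) (k : nat) (nA : 'rV[R]_n -> R)
    (h : 'rV[R]_n) (L0 : {set 'I_n}) (Ls : seq {set 'I_n}) : Prop :=
  let v := restrict h (~: L0) in
  [/\ forall j, (j < size Ls)%N ->
        group_sparse P k (nth set0 Ls j) /\ nth set0 Ls j \subset ~: L0,
      forall i j, (i < j < size Ls)%N -> [disjoint nth set0 Ls i & nth set0 Ls j],
      \bigcup_(A <- Ls) A = ~: L0
    & forall i, (i < size Ls)%N ->
        let r := v - \sum_(0 <= j < i) restrict v (nth set0 Ls j) in
        let prev := L0 :|: \bigcup_(0 <= j < i) nth set0 Ls j in
        nth set0 Ls i \subset ~: prev /\
        forall A, group_sparse P k A -> A \subset ~: prev ->
          nA (r - restrict r (nth set0 Ls i)) <= nA (r - restrict r A)].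

End Defs.

(* Main.v *)
Require Import Defs.
From HB Require Import structures.
From mathcomp Require Import all_boot all_order all_algebra.
From mathcomp Require Import reals.
Import Order.TTheory GRing.Theory Num.Theory.
Local Open Scope ring_scope.
Module PA.
From mathcomp Require Import all_classical all_reals all_analysis.
From mathcomp Require Import lra.
Import Order.TTheory GRing.Theory Num.Theory.
Import numFieldNormedType.Exports.
Local Open Scope classical_set_scope.
Local Open Scope ring_scope.
Set Implicit Arguments. Unset Strict Implicit. Unset Printing Implicit Defensive.

Section PartA.
Variables (R : realType) (n : nat) (nA : 'rV[R]_n -> R).
Hypothesis normA : is_norm nA.

Lemma nA_ge0 x : 0 <= nA x. Proof. by case: normA. Qed.
Lemma nA0 : nA 0 = 0.
Proof. case: normA => _ _ hZ _. by rewrite -(scale0r (0 : 'rV[R]_n)) hZ normr0 mul0r. Qed.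
Lemma nAN x : nA (- x) = nA x.
Proof. case: normA => _ _ hZ _. by rewrite -scaleN1r hZ normrN normr1 mul1r. Qed.
Lemma nAD x y : nA (x + y) <= nA x + nA y. Proof. by case: normA. Qed.
Lemma nAZ a x : nA (a *: x) = `|a| * nA x. Proof. by case: normA. Qed.

Lemma coord_le (x : 'rV[R]_n) i : `|x ord0 i| <= `|x|.
Proof.
rewrite -[`|x|]/(mx_norm x) mx_normrE.
exact: (@le_bigmax _ _ _ 0 (fun ij : 'I_1 * 'I_n => `|x ij.1 ij.2|) (ord0, i)).
Qed.

Definition Cup := \sum_(i < n) nA (delta_mx 0 i).

Lemma nA_sum (r : seq 'I_n) (F : 'I_n -> 'rV[R]_n) :
  nA (\sum_(i <- r) F i) <= \sum_(i <- r) nA (F i).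
Proof.
apply: (big_ind2 (fun a b => nA a <= b)); first by rewrite nA0.
by move=> a b c d h1 h2; apply: le_trans (nAD _ _) (lerD h1 h2).
by [].
Qed.

Lemma nA_up x : nA x <= Cup * `|x|.
Proof.
rewrite {1}(row_sum_delta x) /Cup mulr_suml.
apply: le_trans (nA_sum _ _) _; apply: ler_sum => i _.
rewrite nAZ mulrC; apply: ler_wpM2l; [exact: nA_ge0|exact: coord_le].
Qed.

Lemma nA_cont : continuous nA.
Proof.
move=> x; apply/(@cvgrPdist_le _ _ _ (nbhs x) (nbhs_filter x)) => e e0.
have C0 : 0 < Cup + 1 by rewrite ltr_wpDl // sumr_ge0 // => i _; exact: nA_ge0.
near=> t.
have h : `|x - t| < e / (Cup + 1).
  near: t; apply/nbhs_ballP; exists (e / (Cup + 1)); first exact: divr_gt0.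
  by move=> y; rewrite mx_norm_ball /ball_ /=.
have h2 : nA (x - t) <= e.
  apply: le_trans (nA_up _) _.
  rewrite -[leRHS](@divfK _ (Cup+1)) ?gt_eqF // [leRHS]mulrC.
  apply: ler_pM => //; [by rewrite sumr_ge0 // => i _; exact: nA_ge0| by rewrite lerDl|exact: ltW].
have h3 := nAD (x - t) t; rewrite subrK in h3.
have h4 := nAD (t - x) x; rewrite subrK -opprB nAN in h4.
rewrite ler_norml; apply/andP; split; lra.
Unshelve. all: by end_near.
Qed.

Lemma nA_low : (0 < n)%N -> exists2 m : R, 0 < m & forall x, m * `|x| <= nA x.
Proof.
move=> n0.
pose S := [set v : 'rV[R]_n | `|v| = 1].
have cS : compact S.
  have bS : [bounded x | x in S].
    rewrite /bounded_near; near=> M => v /= Sv; rewrite Sv.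
    by near: M; apply: nbhs_pinfty_ge; rewrite num_real.
  apply: bounded_closed_compact; first exact: bS.
  apply: (@preimage_closed _ _ (@Num.norm _ 'rV[R]_n) [set r : R | r = 1]).
    by move=> y _; exact: norm_continuous.
  exact: closed_eq.
have S0 : S !=set0.
  pose e : 'rV[R]_n := const_mx 1.
  have e0 : e != 0.
    apply/eqP => /rowP /(_ (Ordinal n0)); rewrite !mxE => /eqP; by rewrite oner_eq0.
  exists (`|e|^-1 *: e); rewrite /S /= normrZ normfV normr_id mulVf //.
  by rewrite normr_eq0.
have [c cS' cmin] := EVT_min_rV S0 cS (continuous_subspaceT nA_cont).
have c1 : `|c| = 1 by move: cS'; rewrite inE.
exists (nA c).
  rewrite lt_neqAle nA_ge0 andbT eq_sym; apply/eqP; case: normA => _ hz _ _ /hz c0.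
  by move: c1; rewrite c0 normr0 => /eqP; rewrite eq_sym oner_eq0.
move=> x; case: (eqVneq x 0) => [->|x0]; first by rewrite normr0 mulr0 nA_ge0.
have : (`|x|^-1 *: x) \in S.
  by rewrite inE /S /= normrZ normfV normr_id mulVf // normr_eq0.
move/cmin; rewrite nAZ normfV normr_id => h.
have := ler_wpM2l (normr_ge0 x) h.
by rewrite mulrA mulfV ?normr_eq0 // mul1r mulrC.
Unshelve. all: by end_near.
Qed.

End PartA.
Lemma l2_le (R : realType) n (x : 'rV[R]_n) : (0 < n)%N -> l2norm x <= n%:R * `|x|.
Proof.
move=> n0.
have N1 : 1 <= n%:R :> R by rewrite ler1n.
have hb : \sum_i x ord0 i ^+ 2 <= (n%:R * `|x|) ^+ 2.
  apply: (@le_trans _ _ (\sum_(i < n) `|x| ^+ 2)).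
    apply: ler_sum => i _; rewrite -real_normK ?num_real // !expr2.
    by apply: ler_pM => //; exact: coord_le.
  rewrite sumr_const card_ord -mulr_natr.
  have a0 : 0 <= `|x| ^+ 2 by rewrite exprn_ge0.
  rewrite exprMn; nra.
rewrite /l2norm; apply: le_trans (ler_wsqrtr hb) _.
by rewrite sqrtr_sqr ger0_norm // mulr_ge0.
Qed.


Lemma l2_nA (R : realType) n (nA : 'rV[R]_n -> R) : is_norm nA -> (0 < n)%N ->
  exists2 c : R, 0 < c & forall x, l2norm x <= c * nA x.
Proof.
move=> normA n0.
have [m m0 hm] := nA_low normA n0.
have N0 : 0 < n%:R :> R by rewrite ltr0n.
exists (n%:R / m); first by rewrite divr_gt0.
move=> x; apply: le_trans (l2_le x n0) _.
rewrite -mulrA; apply: ler_wpM2l; first exact: ltW.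
by rewrite ler_pdivlMl // mulrC.
Qed.

End PA.

Set Implicit Arguments. Unset Strict Implicit. Unset Printing Implicit Defensive.
Section PartC.
Variables (R : realType) (n : nat).
Implicit Types (x : 'rV[R]_n) (A B : {set 'I_n}).

Lemma restrictE x A i : restrict x A ord0 i = if i \in A then x ord0 i else 0.
Proof. by rewrite /restrict mxE. Qed.

Lemma restrictU x A B : [disjoint A & B] ->
  restrict x (A :|: B) = restrict x A + restrict x B.
Proof.
move=> dAB; apply/rowP => i; rewrite !mxE in_setU.
case: (boolP (i \in A)) => iA /=.
  by rewrite (disjointFr dAB iA) addr0.
by rewrite add0r.
Qed.

Lemma restrictK x A B : A \subset B -> restrict (restrict x B) A = restrict x A.
Proof.
move=> sAB; apply/rowP => i; rewrite !mxE.
by case: (boolP (i \in A)) => // iA; rewrite (subsetP sAB _ iA).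
Qed.

Lemma supp_restrict x A : supp (restrict x A) \subset A.
Proof.
apply/subsetP => i; rewrite inE mxE.
by case: (i \in A) => //; rewrite eqxx.
Qed.

Lemma mem_bigcup_nat (F : nat -> {set 'I_n}) m i :
  i \in \bigcup_(0 <= j < m) F j -> exists2 j, (j < m)%N & i \in F j.
Proof.
elim: m => [|m IH]; first by rewrite big_geq // inE.
rewrite big_nat_recr //= in_setU => /orP [/IH [j jm ij]|im].
  by exists j => //; apply: leqW.
by exists m.
Qed.

Variable P : {set {set 'I_n}}.
Hypothesis partP : partition P [set: 'I_n].

Definition clo A := forall B, B \in P -> forall i, i \in B -> i \in A -> B \subset A.

Lemma clo_sparse k A : group_sparse P k A -> clo A.
Proof.
case=> [[S SP ->] _] B BP i iB /bigcupP [B' B'S iB'].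
case/and3P: partP => _ tP _.
have B'P : B' \in P := subsetP SP _ B'S.
case: (eqVneq B B') => [-> | neq]; first by apply: bigcup_sup.
by move: ((trivIsetP tP) _ _ BP B'P neq) => /disjointFr => /(_ _ iB); rewrite iB'.
Qed.

Lemma cloU A B : clo A -> clo B -> clo (A :|: B).
Proof.
move=> cA cB C CP i iC; rewrite in_setU => /orP [iA | iB].
  by apply: subset_trans (cA _ CP _ iC iA) (subsetUl _ _).
by apply: subset_trans (cB _ CP _ iC iB) (subsetUr _ _).
Qed.

Lemma clo0 : clo set0.
Proof. by move=> ? ? ? ?; rewrite inE. Qed.

Definition blocks A := [set B in P | B \subset A].

Lemma clo_cover A : clo A -> A \subset cover (blocks A).
Proof.
move=> cA; apply/subsetP => i iA.
case/and3P: partP => /eqP cP _ _.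
have : i \in cover P by rewrite cP inE.
case/bigcupP => B BP iB; apply/bigcupP; exists B => //.
by rewrite inE BP (cA _ BP _ iB iA).
Qed.

Lemma blocks_disj A B : [disjoint A & B] -> [disjoint blocks A & blocks B].
Proof.
move=> dAB; rewrite -setI_eq0; apply/eqP/setP => C; rewrite !inE.
apply/negbTE/negP => /and3P [/andP [CP CA] _ CB].
case/and3P: partP => _ _ n0.
have : C != set0 by apply: contraNneq n0 => <-.
case/set0Pn => i iC.
by move: (disjointFr dAB (subsetP CA _ iC)); rewrite (subsetP CB _ iC).
Qed.

Lemma blocks_sub A : blocks A \subset P.
Proof. by apply/subsetP => C; rewrite inE => /andP []. Qed.

Variables (nA : 'rV[R]_n -> R).
Hypothesis decA : decomposable P nA.
Hypothesis normA : is_norm nA.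

Lemma decU x A B : clo A -> clo B -> [disjoint A & B] ->
  nA (restrict x (A :|: B)) = nA (restrict x A) + nA (restrict x B).
Proof.
move=> cA cB dAB; rewrite restrictU //.
apply: (decA (blocks_sub A) (blocks_sub B) (blocks_disj dAB)).
  exact: subset_trans (supp_restrict _ _) (clo_cover cA).
exact: subset_trans (supp_restrict _ _) (clo_cover cB).
Qed.

Lemma decomp_sum k (Ls : seq {set 'I_n}) x :
  (forall j, (j < size Ls)%N -> group_sparse P k (nth set0 Ls j)) ->
  (forall i j, (i < j < size Ls)%N -> [disjoint nth set0 Ls i & nth set0 Ls j]) ->
  forall m, (m <= size Ls)%N ->
  clo (\bigcup_(0 <= j < m) nth set0 Ls j) /\
  nA (restrict x (\bigcup_(0 <= j < m) nth set0 Ls j)) =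
    \sum_(0 <= j < m) nA (restrict x (nth set0 Ls j)).
Proof.
move=> gs dis; elim=> [|m IH] lem.
  rewrite !big_geq //; split; first exact: clo0.
  have -> : restrict x set0 = 0 by apply/rowP => i; rewrite !mxE inE.
  case: normA => _ _ hZ _.
  by rewrite -(scale0r (0 : 'rV[R]_n)) hZ normr0 mul0r.
have [c e] := IH (ltnW lem).
rewrite !big_nat_recr //=.
have cm := clo_sparse (gs _ lem).
split; first exact: cloU.
rewrite (decU _ c cm); first by rewrite e.
rewrite -setI_eq0; apply/eqP/setP => i; rewrite !inE.
apply/negbTE/negP => /andP [/mem_bigcup_nat [j jm ij] im].
have := dis j m; rewrite lem andbT.
move=> /(_ jm) /disjointFr /(_ ij); rewrite im.
by [].
Qed.

End PartC.

From mathcomp Require Import lra.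

Theorem lemma4p1 (R : realType) (n k : nat) (P : {set {set 'I_n}})
    (nA : 'rV[R]_n -> R) :
  (0 < n)%N -> (0 < k)%N ->
  partition P [set: 'I_n] ->
  (forall B, B \in P -> (#|B| <= k)%N) ->
  is_norm nA -> decomposable P nA ->
  exists2 f : R, 0 < f &
    forall (h : 'rV[R]_n) (L0 : {set 'I_n}) (Ls : seq {set 'I_n}),
      group_sparse P k L0 ->
      optimal_decomp P k nA h L0 Ls ->
      \sum_(1 <= j < size Ls) l2norm (restrict h (nth set0 Ls j))
        <= f^-1 * nA (restrict h (~: L0)).
Proof.
move=> n0 k0 partP Pk normA decA.
have [c c0 hc] := PA.l2_nA normA n0.
exists c^-1; first by rewrite invr_gt0.
move=> h L0 Ls gL0 [gs dis cov opt].
set v := restrict h (~: L0).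
have [_ e] := @decomp_sum R n P partP nA decA normA k Ls v
   (fun j jl => (gs j jl).1) dis (size Ls) (leqnn _).
have U : \bigcup_(0 <= j < size Ls) nth set0 Ls j = ~: L0.
  by rewrite -cov (big_nth set0).
rewrite U /v restrictK // in e.
have term : forall j, (j < size Ls)%N ->
    l2norm (restrict h (nth set0 Ls j)) <= c * nA (restrict v (nth set0 Ls j)).
  move=> j jl; rewrite /v restrictK; last exact: (gs j jl).2.
  exact: hc.
rewrite invrK e mulr_sumr.
case: (posnP (size Ls)) => [-> | sp].
  by rewrite !big_geq.
rewrite (big_ltn sp) /=.
apply: (@le_trans _ _ (\sum_(1 <= i < size Ls) c * nA (restrict v (nth set0 Ls i)))).
  rewrite !big_nat; apply: ler_sum => j /andP [_ jl]; exact: term.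
rewrite lerDr; apply: mulr_ge0; first exact: ltW.
exact: PA.nA_ge0.
Qed.
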